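(* For linearly topologized $k$-vector spaces $E,F$, let $\Phi_{E,F}\colon E^\circ\otimes F^\circ\to (E\otimes^! F)^\circ$ be the linear map sending $\phi\otimes\psi$ to the functional $e\otimes f\mapsto \phi(e)\psi(f)$ (this functional is continuous on $E\otimes^! F$). Together with the identification $k^\circ\cong k$, the maps $\Phi_{E,F}$ make the continuous dual functor \[(-)^\circ=\mathrm{Top}_k(-,k)\colon (\mathrm{Top}_k,\otimes^!,k)^{\mathrm{op}}\to(\mathrm{Vect}_k,\otimes,k)\] a lax monoidal functor. Moreover, its restriction to the full subcategory $\mathrm{CF}_k$ of cofinite spaces is a strong monoidal functor $(\mathrm{CF}_k,\otimes^!,k)^{\mathrm{op}}\to(\mathrm{Vect}_k,\otimes,k)$; in particular, $\Phi_{E,F}$ is an isomorphism $E^\circ\otimes F^\circ\cong (E\otimes^! F)^\circ$ whenever $E$ and $F$ are cofinite.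
   Context: $k$ is an arbitrary field with the discrete topology. A linearly topologized $k$-vector space is a topological $k$-vector space having a neighborhood basis of $0$ consisting of open linear subspaces. $\mathrm{Top}_k$ denotes the category of linearly topologized $k$-vector spaces with continuous linear maps, and $\mathrm{Vect}_k$ the category of $k$-vector spaces (identified with the discrete objects of $\mathrm{Top}_k$). A linearly topologized space is cofinite if all its open subspaces have finite codimension; $\mathrm{CF}_k$ is the full subcategory of cofinite spaces. For $E,F\in\mathrm{Top}_k$, $E\otimes^! F$ denotes the vector space $E\otimes_k F$ with the linear topology whose open subspaces are the subspaces $W$ for which there are open subspaces $E_0\subseteq E$, $F_0\subseteq F$ with $E_0\otimes F+E\otimes F_0\subseteq W$; this makes $\mathrm{Top}_k$ and $\mathrm{CF}_k$ monoidal categories with unit $k$. The continuous dual is $E^\circ=\mathrm{Top}_k(E,k)$, the space of linear functionals on $E$ with open kernel. *)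

(* Defs.v *)
From HB Require Import structures.
From mathcomp Require Import all_boot all_algebra.
From mathcomp Require Import boolp classical_sets functions.
Unset Implicit Arguments.
Import GRing.Theory.
Local Open Scope ring_scope.

Definition islin {k : fieldType} {U V : lmodType k} (f : U -> V) : Prop :=
  forall (a : k) (x y : U), f (a *: x + y) = a *: f x + f y.

Definition subspace {k : fieldType} {U : lmodType k} (W : U -> Prop) : Prop :=
  W 0 /\ forall (a : k) (x y : U), W x -> W y -> W (a *: x + y).

Definition bilin {k : fieldType} {U V W : lmodType k} (b : U -> V -> W) : Prop :=
  (forall u, islin (b u)) /\ (forall v, islin (fun u => b u v)).

Definition is_tensor {k : fieldType} {U V T : lmodType k} (t : U -> V -> T) : Prop :=
  bilin t /\
  forall (W : lmodType k) (b : U -> V -> W), bilin b ->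
    exists f : T -> W, islin f /\ (forall u v, f (t u v) = b u v) /\
      forall g : T -> W, islin g -> (forall u v, g (t u v) = b u v) -> g = f.

(** A linear topology on a k-vector space is determined by (and determines)
    its set of open linear subspaces: a nonempty, upward closed (among
    subspaces) family of subspaces closed under finite intersections.  The
    open sets are then the unions of cosets of open subspaces.  We record a
    linearly topologized space by its family of open subspaces. *)
Record ltvs (k : fieldType) := LTVS {
  lt_car :> lmodType k;
  lt_open : (lt_car -> Prop) -> Prop;
  lt_open_subspace : forall W, lt_open W -> subspace W;
  lt_open_full : lt_open (fun _ => True);
  lt_open_up : forall W W', lt_open W -> subspace W' ->
     (forall x, W x -> W' x) -> lt_open W';
  lt_open_cap : forall W W', lt_open W -> lt_open W' ->
     lt_open (fun x => W x /\ W' x) }.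
Arguments lt_open {k}.

(** continuous maps: preimages of open subspaces are open subspaces
    (for linear maps this is continuity) *)
Definition cont {k : fieldType} {E F : ltvs k} (f : E -> F) : Prop :=
  forall W, lt_open F W -> lt_open E (fun x => W (f x)).

Definition is_morph {k : fieldType} {E F : ltvs k} (f : E -> F) : Prop :=
  islin f /\ cont f.

(** cofinite: every open subspace has finite codimension *)
Definition cofinite {k : fieldType} (E : ltvs k) : Prop :=
  forall W, lt_open E W ->
    exists s : seq E, forall x : E,
      exists c : 'I_(size s) -> k, W (x - \sum_(i < size s) c i *: s`_i).

Lemma subspace_ker {k : fieldType} {U V : lmodType k} (f : U -> V) :
  islin f -> subspace (fun x => f x = 0).
Proof.
move=> lf; have f0 : f 0 = 0.
  have h := lf 1 0 0; rewrite !scale1r addr0 in h.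
  by have := congr1 (fun z => z - f 0) h; rewrite /= subrr addrK => ->.
split=> // a x y fx fy; by rewrite lf fx fy scaler0 addr0.
Qed.

Section KDisc.
Variable k : fieldType.
Lemma kd_sub (W : k^o -> Prop) : subspace W -> subspace W. Proof. by []. Qed.
Lemma kd_full : subspace (fun _ : k^o => True). Proof. by []. Qed.
Lemma kd_up (W W' : k^o -> Prop) : subspace W -> subspace W' ->
  (forall x, W x -> W' x) -> subspace W'. Proof. by []. Qed.
Lemma kd_cap (W W' : k^o -> Prop) : subspace W -> subspace W' ->
  subspace (fun x => W x /\ W' x).
Proof.
move=> [W0 WD] [W'0 W'D]; split=> // a x y [? ?] [? ?]; split; [exact: WD|exact: W'D].
Qed.
Definition kdisc : ltvs k := LTVS k k^o subspace kd_sub kd_full kd_up kd_cap.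
End KDisc.
Arguments kdisc k : clear implicits.

(** * The topology of [E (x)^! F] on a tensor product [(T, t)] of the
    underlying spaces: W is open iff W is a subspace and there are open
    E0, F0 with E0 (x) F + E (x) F0 contained in W (i.e. W contains all
    t e0 f and t e f0). *)
Section Bang.
Variables (k : fieldType) (E F : ltvs k) (T : lmodType k) (t : E -> F -> T).
Definition bang_open (W : T -> Prop) : Prop :=
  subspace W /\ exists (E0 : E -> Prop) (F0 : F -> Prop),
    [/\ lt_open E E0, lt_open F F0,
        (forall e f, E0 e -> W (t e f)) & (forall e f, F0 f -> W (t e f))].
Lemma bang_sub W : bang_open W -> subspace W. Proof. by case. Qed.
Lemma bang_full : bang_open (fun _ => True).
Proof.
split=> //; exists (fun _ => True), (fun _ => True); split=> //; exact: lt_open_full.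
Qed.
Lemma bang_up W W' : bang_open W -> subspace W' ->
  (forall x, W x -> W' x) -> bang_open W'.
Proof.
move=> [_ [E0 [F0 [oE oF h1 h2]]]] sW' sub; split=> //.
by exists E0, F0; split=> // e f ?; apply: sub; [exact: h1|exact: h2].
Qed.
Lemma bang_cap W W' : bang_open W -> bang_open W' ->
  bang_open (fun x => W x /\ W' x).
Proof.
move=> [[W0 WD] [E0 [F0 [oE oF h1 h2]]]] [[W'0 W'D] [E1 [F1 [oE1 oF1 h1' h2']]]].
split; first by split=> // a x y [? ?] [? ?]; split; [exact: WD|exact: W'D].
exists (fun x => E0 x /\ E1 x), (fun x => F0 x /\ F1 x); split.
- exact: lt_open_cap.
- exact: lt_open_cap.
- by move=> e f [? ?]; split; [exact: h1|exact: h1'].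
- by move=> e f [? ?]; split; [exact: h2|exact: h2'].
Qed.
Definition bang : ltvs k := LTVS k T bang_open bang_sub bang_full bang_up bang_cap.
End Bang.
Arguments bang {k} E F {T} t.

(** * The continuous dual E° = Top_k(E, k): linear functionals with open
    kernel, as a k-vector space (subspace of the functions E -> k). *)
Definition is_cfun {k : fieldType} (E : ltvs k) (f : E -> k^o) : Prop :=
  islin f /\ lt_open E (fun x => f x = 0).
Definition cfun_pred {k : fieldType} (E : ltvs k) : {pred (E -> k^o)} :=
  fun f => `[< is_cfun E f >].
Record cdual {k : fieldType} (E : ltvs k) :=
  CDual { cdfun :> E -> k^o; _ : cdfun \in cfun_pred E }.
Arguments cdfun {k E}.

Section DualInst.
Variables (k : fieldType) (E : ltvs k).
HB.instance Definition _ := [isSub for @cdfun k E].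
HB.instance Definition _ := [Choice of cdual E by <:].
Lemma cfun_submod : submod_closed (cfun_pred E).
Proof.
split.
  apply/asboolP; split; first by move=> a x y; rewrite /= scaler0 addr0.
  apply: (lt_open_up _ E _ _ (lt_open_full _ E)); last by [].
  by split=> // a x y _ _ /=.
move=> a u v /asboolP [lu ou] /asboolP [lv ov]; apply/asboolP.
have ev z : (a *: u + v) z = a *: u z + v z by [].
split.
  move=> b x y; rewrite !ev lu lv.
  rewrite !scalerDr !scalerA [a * b]mulrC !addrA; congr (_ + _).
  by rewrite -!addrA; congr (_ + _); rewrite addrC.
apply: (lt_open_up _ E _ _ (lt_open_cap _ E _ _ ou ov)).
  apply: (@subspace_ker k E k^o (fun x => a *: u x + v x)).
  move=> b x y; rewrite lu lv !scalerDr !scalerA [a * b]mulrC !addrA.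
  by congr (_ + _); rewrite -!addrA; congr (_ + _); rewrite addrC.
by move=> x [ux vx]; rewrite ev ux vx scaler0 addr0.
Qed.
HB.instance Definition _ :=
  GRing.isSubmodClosed.Build k (E -> k^o) (cfun_pred E) cfun_submod.
HB.instance Definition _ := [SubChoice_isSubLmodule of cdual E by <:].
End DualInst.

(** The action of the dual functor on a morphism [a : E' -> E] of Top_k:
    [a° : E° -> E'°], phi |-> phi o a.  (For a continuous linear [a] the
    composite is continuous linear; otherwise we return 0 — only used for
    morphisms.) *)
Definition dmap {k : fieldType} {E' E : ltvs k} (a : E' -> E) (phi : cdual E)
  : cdual E' := insubd (0 : cdual E') (fun x => cdfun phi (a x)).

(** The identification k ≅ k°, c |-> (x |-> c x) *)
Definition eps {k : fieldType} (c : k^o) : cdual (kdisc k) :=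
  insubd (0 : cdual (kdisc k)) (fun x : k^o => c * x).

(** * Specifications of the structure maps (each determined uniquely, by the
    universal property of the tensor products involved). *)

Definition mu_spec {k : fieldType} (E F : ltvs k)
  {D : lmodType k} (d : cdual E -> cdual F -> D)
  {T : lmodType k} (t : E -> F -> T) (Phi : D -> cdual (bang E F t)) : Prop :=
  islin Phi /\
  forall phi psi (e : E) (f : F), cdfun (Phi (d phi psi)) (t e f) = phi e * psi f.

Definition tmap_spec {k : fieldType} {U V U' V' T T' : lmodType k}
  (t : U -> V -> T) (t' : U' -> V' -> T') (f : U -> U') (g : V -> V')
  (h : T -> T') : Prop :=
  islin h /\ forall u v, h (t u v) = t' (f u) (g v).

Definition assoc_spec {k : fieldType} {X Y Z TXY TYZ TL TR : lmodType k}
  (t1 : X -> Y -> TXY) (t2 : TXY -> Z -> TL)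
  (t3 : Y -> Z -> TYZ) (t4 : X -> TYZ -> TR) (a : TL -> TR) : Prop :=
  islin a /\ forall x y z, a (t2 (t1 x y) z) = t4 x (t3 y z).

Definition lunit_spec {k : fieldType} {V T : lmodType k}
  (t : k^o -> V -> T) (l : T -> V) : Prop :=
  islin l /\ forall c v, l (t c v) = c *: v.
Definition runit_spec {k : fieldType} {V T : lmodType k}
  (t : V -> k^o -> T) (r : T -> V) : Prop :=
  islin r /\ forall v c, r (t v c) = c *: v.

Definition dual_functor (k : fieldType) : Prop :=
  (forall (E : ltvs k) (phi : cdual E), dmap (@id E) phi = phi) /\
  (forall (E F : ltvs k) (a : E -> F), is_morph a -> islin (dmap a)) /\
  (forall (E F G : ltvs k) (a : E -> F) (b : F -> G),
     is_morph a -> is_morph b ->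
     forall phi : cdual G, dmap (fun x => b (a x)) phi = dmap a (dmap b phi)).

Definition mu_exists (k : fieldType) : Prop :=
  forall (E F : ltvs k) (D : lmodType k) (d : cdual E -> cdual F -> D)
    (T : lmodType k) (t : E -> F -> T),
  is_tensor d -> is_tensor t ->
  exists Phi : D -> cdual (bang E F t), mu_spec E F d t Phi.

(** naturality of Phi: for morphisms a : E' -> E, b : F' -> F of Top_k,
    (a (x) b)° o Phi_{E,F} = Phi_{E',F'} o (a° (x) b°). *)
Definition mu_natural (k : fieldType) : Prop :=
  forall (E E' F F' : ltvs k) (a : E' -> E) (b : F' -> F),
  is_morph a -> is_morph b ->
  forall (D : lmodType k) (d : cdual E -> cdual F -> D)
    (D' : lmodType k) (d' : cdual E' -> cdual F' -> D')
    (T : lmodType k) (t : E -> F -> T)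
    (T' : lmodType k) (t' : E' -> F' -> T'),
  is_tensor d -> is_tensor d' -> is_tensor t -> is_tensor t' ->
  forall (Phi : D -> cdual (bang E F t)) (Phi' : D' -> cdual (bang E' F' t'))
    (m : D -> D') (ab : T' -> T),
  mu_spec E F d t Phi -> mu_spec E' F' d' t' Phi' ->
  tmap_spec d d' (dmap a) (dmap b) m -> tmap_spec t' t a b ab ->
  forall (x : D) (y : T'), cdfun (Phi' (m x)) y = cdfun (Phi x) (ab y).

(** associativity coherence:
    F(alpha) o Phi_{X(x)Y,Z} o (Phi_{X,Y} (x) 1)
      = Phi_{X,Y(x)Z} o (1 (x) Phi_{Y,Z}) o alpha_Vect,
    where F(alpha) is precomposition with the (inverse of the) associator
    alpha : (X(x)Y)(x)Z -> X(x)(Y(x)Z); stated with alpha on the argument. *)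
Definition mu_assoc (k : fieldType) : Prop :=
  forall (X Y Z : ltvs k)
    (T1 : lmodType k) (t1 : X -> Y -> T1)
    (T2 : lmodType k) (t2 : bang X Y t1 -> Z -> T2)
    (T3 : lmodType k) (t3 : Y -> Z -> T3)
    (T4 : lmodType k) (t4 : X -> bang Y Z t3 -> T4)
    (al : T2 -> T4)
    (D1 : lmodType k) (d1 : cdual X -> cdual Y -> D1)
    (D2 : lmodType k) (d2 : D1 -> cdual Z -> D2)
    (D3 : lmodType k) (d3 : cdual Y -> cdual Z -> D3)
    (D4 : lmodType k) (d4 : cdual X -> D3 -> D4)
    (al' : D2 -> D4)
    (D5 : lmodType k) (d5 : cdual (bang X Y t1) -> cdual Z -> D5)
    (D6 : lmodType k) (d6 : cdual X -> cdual (bang Y Z t3) -> D6)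
    (P1 : D1 -> cdual (bang X Y t1)) (P3 : D3 -> cdual (bang Y Z t3))
    (P5 : D5 -> cdual (bang (bang X Y t1) Z t2))
    (P6 : D6 -> cdual (bang X (bang Y Z t3) t4))
    (m1 : D2 -> D5) (m2 : D4 -> D6),
  is_tensor t1 -> is_tensor t2 -> is_tensor t3 -> is_tensor t4 ->
  is_tensor d1 -> is_tensor d2 -> is_tensor d3 -> is_tensor d4 ->
  is_tensor d5 -> is_tensor d6 ->
  assoc_spec t1 t2 t3 t4 al -> assoc_spec d1 d2 d3 d4 al' ->
  mu_spec X Y d1 t1 P1 -> mu_spec Y Z d3 t3 P3 ->
  mu_spec (bang X Y t1) Z d5 t2 P5 -> mu_spec X (bang Y Z t3) d6 t4 P6 ->
  tmap_spec d2 d5 P1 id m1 -> tmap_spec d4 d6 id P3 m2 ->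
  forall (x : D2) (y : T2), cdfun (P5 (m1 x)) y = cdfun (P6 (m2 (al' x))) (al y).

(** unit coherence (left and right), with the unit eps : k -> k°:
    F(lambda_X) o Phi_{k,X} o (eps (x) 1) = lambda_{X°}, where F(lambda_X)
    is precomposition with x |-> 1 (x) x; similarly on the right. *)
Definition mu_unit (k : fieldType) : Prop :=
  (forall (X : ltvs k)
     (Dk : lmodType k) (dk : k^o -> cdual X -> Dk)
     (D : lmodType k) (d : cdual (kdisc k) -> cdual X -> D)
     (T : lmodType k) (t : kdisc k -> X -> T)
     (Phi : D -> cdual (bang (kdisc k) X t)) (m : Dk -> D) (lam : Dk -> cdual X),
   is_tensor dk -> is_tensor d -> is_tensor t ->
   mu_spec (kdisc k) X d t Phi -> tmap_spec dk d eps id m -> lunit_spec dk lam ->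
   forall (z : Dk) (x : X), cdfun (Phi (m z)) (t 1 x) = cdfun (lam z) x) /\
  (forall (X : ltvs k)
     (Dk : lmodType k) (dk : cdual X -> k^o -> Dk)
     (D : lmodType k) (d : cdual X -> cdual (kdisc k) -> D)
     (T : lmodType k) (t : X -> kdisc k -> T)
     (Phi : D -> cdual (bang X (kdisc k) t)) (m : Dk -> D) (rho : Dk -> cdual X),
   is_tensor dk -> is_tensor d -> is_tensor t ->
   mu_spec X (kdisc k) d t Phi -> tmap_spec dk d id eps m -> runit_spec dk rho ->
   forall (z : Dk) (x : X), cdfun (Phi (m z)) (t x 1) = cdfun (rho z) x).

Definition dual_lax_monoidal (k : fieldType) : Prop :=
  [/\ dual_functor k, mu_exists k, mu_natural k, mu_assoc k & mu_unit k].

Definition dual_strong_on_cofinite (k : fieldType) : Prop :=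
  bijective (@eps k) /\
  forall (E F : ltvs k), cofinite E -> cofinite F ->
  forall (D : lmodType k) (d : cdual E -> cdual F -> D)
    (T : lmodType k) (t : E -> F -> T) (Phi : D -> cdual (bang E F t)),
  is_tensor d -> is_tensor t -> mu_spec E F d t Phi -> bijective Phi.

(* Main.v *)
Require Import Defs.
From HB Require Import structures.
From mathcomp Require Import all_boot all_algebra.
From mathcomp Require Import boolp classical_sets functions.
From mathcomp Require Import ring.
Import GRing.Theory.
Local Open Scope ring_scope.

Section Gen.
Variable k : fieldType.

Lemma linD {U V : lmodType k} {f : U -> V} : islin f -> forall x y, f (x + y) = f x + f y.
Proof. by move=> lf x y; have := lf 1 x y; rewrite !scale1r. Qed.
Lemma lin0 {U V : lmodType k} {f : U -> V} : islin f -> f 0 = 0.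
Proof.
move=> lf; have h := linD lf 0 0; rewrite addr0 in h.
by have := congr1 (fun z => z - f 0) h; rewrite /= subrr addrK.
Qed.
Lemma linZ {U V : lmodType k} {f : U -> V} : islin f -> forall a x, f (a *: x) = a *: f x.
Proof. by move=> lf a x; have := lf a x 0; rewrite !addr0 lin0 // addr0. Qed.
Lemma linN {U V : lmodType k} {f : U -> V} : islin f -> forall x, f (- x) = - f x.
Proof. by move=> lf x; rewrite -scaleN1r linZ // scaleN1r. Qed.
Lemma linB {U V : lmodType k} {f : U -> V} : islin f -> forall x y, f (x - y) = f x - f y.
Proof. by move=> lf x y; rewrite linD // linN. Qed.
Lemma lin_sum {U V : lmodType k} {f : U -> V} (I : Type) (r : seq I) (F : I -> U) :
  islin f -> f (\sum_(i <- r) F i) = \sum_(i <- r) f (F i).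
Proof.
move=> lf; elim: r => [|i r IH]; first by rewrite !big_nil lin0.
by rewrite !big_cons linD // IH.
Qed.
Lemma lin_comp {U V W : lmodType k} (f : U -> V) (g : V -> W) :
  islin f -> islin g -> islin (fun x => g (f x)).
Proof. by move=> lf lg a x y; rewrite lf lg. Qed.
Lemma lin_id {U : lmodType k} : islin (fun x : U => x).
Proof. by []. Qed.

Lemma tens_bilin {U V T : lmodType k} {t : U -> V -> T} : is_tensor t -> bilin t.
Proof. by case. Qed.

Lemma tens_uniq {U V T W : lmodType k} {t : U -> V -> T} : is_tensor t ->
  forall g1 g2 : T -> W, islin g1 -> islin g2 ->
  (forall u v, g1 (t u v) = g2 (t u v)) -> g1 = g2.
Proof.
move=> [[bt1 bt2] ht] g1 g2 l1 l2 h.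
have bb : bilin (fun u v => g1 (t u v)).
  split=> [u|v]; apply: lin_comp => //. 
have [f [lf [hf uf]]] := ht W _ bb.
by rewrite (uf g1) // (uf g2) // => u v; rewrite h.
Qed.

Lemma cfunP {E : ltvs k} (phi : cdual E) : is_cfun E phi.
Proof. exact/asboolP/(valP phi). Qed.
Lemma cflin {E : ltvs k} (phi : cdual E) : islin (cdfun phi).
Proof. by case: (cfunP phi). Qed.
Lemma cfopen {E : ltvs k} (phi : cdual E) : lt_open E (fun x => phi x = 0).
Proof. by case: (cfunP phi). Qed.
Lemma cdD {E : ltvs k} (u v : cdual E) x : cdfun (u + v) x = cdfun u x + cdfun v x.
Proof. by []. Qed.
Lemma cdZ {E : ltvs k} a (u : cdual E) x : cdfun (a *: u) x = a * cdfun u x.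
Proof. by []. Qed.
Lemma cd0 {E : ltvs k} x : cdfun (0 : cdual E) x = 0.
Proof. by []. Qed.
Lemma cdN {E : ltvs k} (u : cdual E) x : cdfun (- u) x = - cdfun u x.
Proof. by []. Qed.
Lemma cd_ext {E : ltvs k} (u v : cdual E) : (forall x, u x = v x) -> u = v.
Proof. by move=> h; apply: val_inj; apply: funext. Qed.
Lemma cd_lin {D : lmodType k} (E : ltvs k) (P : D -> cdual E) :
  islin P -> islin (fun x => cdfun (P x) : E -> k^o).
Proof. by move=> lP a x y; rewrite lP. Qed.
Lemma mkcd (E : ltvs k) (g : E -> k^o) : islin g -> lt_open E (fun x => g x = 0) ->
  exists phi : cdual E, cdfun phi = g.
Proof.
move=> lg og; have hg : g \in cfun_pred E by apply/asboolP.
by exists (CDual _ _ g hg).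
Qed.

Lemma morph_comp (E F G : ltvs k) (a : E -> F) (b : F -> G) :
  is_morph a -> is_morph b -> is_morph (fun x => b (a x)).
Proof.
move=> [la ca] [lb cb]; split; first exact: lin_comp.
by move=> W oW; apply: (ca _ (cb _ oW)).
Qed.

Lemma dmapE (E' E : ltvs k) (a : E' -> E) (phi : cdual E) : is_morph a ->
  cdfun (dmap a phi) = fun x => phi (a x).
Proof.
move=> [la ca]; rewrite /dmap insubdK //; apply/asboolP; split.
  exact: lin_comp (cflin phi).
exact: (ca _ (cfopen phi)).
Qed.

Lemma dual_functorP : dual_functor k.
Proof.
split; [|split].
- move=> E phi; apply: cd_ext => x; rewrite /dmap insubdK //.
  by apply/asboolP; exact: cfunP.
- move=> E F a ma b u v; apply: cd_ext => x.
  by rewrite /= !dmapE.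
- move=> E F G a b ma mb phi; apply: cd_ext => x.
  by rewrite !dmapE //; apply: morph_comp.
Qed.

Lemma cd_tens {E F : ltvs k} {T : lmodType k} {t : E -> F -> T} : is_tensor t ->
  forall u v : cdual (bang E F t),
  (forall e f, cdfun u (t e f) = cdfun v (t e f)) -> u = v.
Proof.
move=> ht u v h; apply: val_inj.
exact: (@tens_uniq _ _ T _ t ht (cdfun u) (cdfun v) (cflin u) (cflin v) h).
Qed.

Lemma cflinT {E F : ltvs k} {T : lmodType k} {t : E -> F -> T}
  (u : cdual (bang E F t)) : @islin k T k^o (cdfun u).
Proof. exact: (cflin u). Qed.

Lemma bil_mul {E F : ltvs k} (phi : cdual E) (psi : cdual F) :
  bilin (fun (e : E) (f : F) => (phi e * psi f : k^o)).
Proof.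
split=> [e|f] a x y /=.
- rewrite (cflin psi) mulrDr; congr (_ + _).
  by rewrite /GRing.scale /= mulrCA.
- rewrite (cflin phi) mulrDl; congr (_ + _).
  by rewrite /GRing.scale /= mulrA.
Qed.

Lemma bfun_ex {E F : ltvs k} {T : lmodType k} {t : E -> F -> T} : is_tensor t ->
  forall (phi : cdual E) (psi : cdual F),
  exists g : cdual (bang E F t), forall e f, g (t e f) = phi e * psi f.
Proof.
move=> ht phi psi.
have [g [lg [hg _]]] := ht.2 _ _ (bil_mul phi psi).
have og : lt_open (bang E F t) (fun x => g x = 0).
  split; first exact: subspace_ker.
  exists (fun x => phi x = 0), (fun y => psi y = 0); split.
  - exact: cfopen.
  - exact: cfopen.
  - by move=> e f /= h; rewrite hg h mul0r.
  - by move=> e f /= h; rewrite hg h mulr0.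
have [G hG] := @mkcd (bang E F t) g lg og.
by exists G => e f; rewrite hG hg.
Qed.

Lemma mu_existsP : mu_exists k.
Proof.
move=> E F D d T t hd ht.
have hex : forall phi : cdual E, exists Bp : cdual F -> cdual (bang E F t),
    forall psi e f, Bp psi (t e f) = phi e * psi f.
  by move=> phi; have [f hf] := choice (bfun_ex ht phi); exists f.
have [B hB] := choice hex.
have bB : bilin B.
  split=> [phi|psi] a x y; apply: (cd_tens ht) => e f; rewrite cdD cdZ !hB !cdD !cdZ.
  - by rewrite mulrDr mulrCA.
  - by rewrite mulrDl mulrA.
have [Phi [lPhi [hPhi _]]] := hd.2 _ B bB.
by exists Phi; split => // phi psi e f; rewrite hPhi hB.
Qed.

Lemma mu_naturalP : mu_natural k.
Proof.
move=> E E' F F' a b ma mb D d D' d' T t T' t' hd hd' ht ht' Phi Phi' m ab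
  [lP hP] [lP' hP'] [lm hm] [lab hab].
suff: (fun x => cdfun (Phi' (m x)) : T' -> k^o) =
      (fun x => fun y => cdfun (Phi x) (ab y)).
  by move=> h x y; have := congr1 (fun g => g x y) h.
apply: (@tens_uniq _ _ D (T' -> k^o) d hd).
- by move=> c x z /=; rewrite lm lP'.
- by move=> c x z; apply: funext => y /=; rewrite lP.
- move=> phi psi; apply: (@tens_uniq _ _ T' k^o t' ht').
  + exact: cflinT.
  + exact: lin_comp lab (cflinT _).
  + by move=> e f; rewrite hm hP' hab hP !dmapE.
Qed.

Lemma bil1 {U V W : lmodType k} {b : U -> V -> W} : bilin b ->
  forall a x y v, b (a *: x + y) v = a *: b x v + b y v.
Proof. by move=> [_ h] a x y v; apply: (h v). Qed.
Lemma bil2 {U V W : lmodType k} {b : U -> V -> W} : bilin b ->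
  forall a u x y, b u (a *: x + y) = a *: b u x + b u y.
Proof. by move=> [h _] a u x y; apply: (h u). Qed.

Lemma mu_assocP : mu_assoc k.
Proof.
move=> X Y Z T1 t1 T2 t2 T3 t3 T4 t4 al D1 d1 D2 d2 D3 d3 D4 d4 al' D5 d5
  D6 d6 P1 P3 P5 P6 m1 m2 ht1 ht2 ht3 ht4 hd1 hd2 hd3 hd4 hd5 hd6
  [lal hal] [lal' hal'] [lP1 hP1] [lP3 hP3] [lP5 hP5] [lP6 hP6] [lm1 hm1] [lm2 hm2].
suff: (fun x => cdfun (P5 (m1 x)) : T2 -> k^o) =
      (fun x y => cdfun (P6 (m2 (al' x))) (al y)).
  by move=> h x y; have := congr1 (fun g => g x y) h.
apply: (@tens_uniq _ _ D2 (T2 -> k^o) d2 hd2).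
- by move=> c x z /=; rewrite lm1 lP5.
- by move=> c x z; apply: funext => y /=; rewrite lal' lm2 lP6.
move=> w chi.
suff: (fun w => cdfun (P5 (m1 (d2 w chi))) : T2 -> k^o) =
      (fun w y => cdfun (P6 (m2 (al' (d2 w chi)))) (al y)).
  by move=> h; have := congr1 (fun g => g w) h.
apply: (@tens_uniq _ _ D1 (T2 -> k^o) d1 hd1).
- by move=> c x z /=; rewrite (bil1 (tens_bilin hd2)) lm1 lP5.
- by move=> c x z; apply: funext => y /=; rewrite (bil1 (tens_bilin hd2)) lal' lm2 lP6.
move=> phi psi.
apply: (@tens_uniq _ _ T2 k^o t2 ht2).
- exact: cflinT.
- exact: lin_comp lal (cflinT _).
move=> s z; rewrite hm1 hP5 hal' hm2.
suff: (fun s => cdfun (P1 (d1 phi psi)) s * chi z : k^o) =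
      (fun s => cdfun (P6 (d6 phi (P3 (d3 psi chi)))) (al (t2 s z))).
  by move=> h; have := congr1 (fun g => g s) h.
apply: (@tens_uniq _ _ T1 k^o t1 ht1).
- move=> c u v /=; rewrite (cflinT (P1 (d1 phi psi))) mulrDl; congr (_ + _).
  by rewrite /GRing.scale /= mulrA.
- apply: lin_comp; last exact: cflinT.
  apply: lin_comp lal.
  by move=> c u v; rewrite (bil1 (tens_bilin ht2)).
by move=> x y; rewrite hP1 hal hP6 hP3 mulrA.
Qed.

Lemma epsE (c : k^o) : cdfun (@eps k c) = fun x => c * x.
Proof.
have l : islin (fun x : k^o => c * x : k^o).
  by move=> a x y; rewrite mulrDr /GRing.scale /= mulrCA.
rewrite /eps insubdK //; apply/asboolP; split=> //.
exact (subspace_ker _ l).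
Qed.

Lemma mu_unitP : mu_unit k.
Proof.
split.
- move=> X Dk dk D d T t Phi m lam hdk hd ht [lP hP] [lm hm] [ll hl] z x.
  suff: (fun z => fun x => cdfun (Phi (m z)) (t 1 x)) =
        (fun z => cdfun (lam z) : X -> k^o).
    by move=> h; have := congr1 (fun g => g z x) h.
  apply: (@tens_uniq _ _ Dk (X -> k^o) dk hdk).
  + by move=> c u v; apply: funext => y /=; rewrite lm lP.
  + by move=> c u v /=; rewrite ll.
  + move=> c psi; apply: funext => y /=; rewrite hm hP hl epsE cdZ.
    by rewrite mulr1.
- move=> X Dk dk D d T t Phi m rho hdk hd ht [lP hP] [lm hm] [ll hl] z x.
  suff: (fun z => fun x => cdfun (Phi (m z)) (t x 1)) =
        (fun z => cdfun (rho z) : X -> k^o).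
    by move=> h; have := congr1 (fun g => g z x) h.
  apply: (@tens_uniq _ _ Dk (X -> k^o) dk hdk).
  + by move=> c u v; apply: funext => y /=; rewrite lm lP.
  + by move=> c u v /=; rewrite ll.
  + move=> psi c; apply: funext => y /=; rewrite hm hP hl epsE cdZ.
    by rewrite mulr1 mulrC.
Qed.

Lemma eps_bij : bijective (@eps k).
Proof.
exists (fun phi : cdual (kdisc k) => cdfun phi (1 : k^o)).
  by move=> c; rewrite epsE mulr1.
move=> phi; apply: cd_ext => x; rewrite epsE.
have := linZ (cflin phi) x 1.
by rewrite /GRing.scale /= mulr1 => ->; rewrite mulrC.
Qed.

Section SubSp.
Variables (D : lmodType k) (P : D -> Prop) (hP : subspace P).
Definition sp_pred : {pred D} := fun x => `[< P x >].
Record subsp := SubSp { ssval :> D; _ : ssval \in sp_pred }.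
HB.instance Definition _ := [isSub for ssval].
HB.instance Definition _ := [Choice of subsp by <:].
Lemma sp_submod : submod_closed sp_pred.
Proof.
case: hP => P0 PD; split; first by apply/asboolP.
by move=> a u v /asboolP Pu /asboolP Pv; apply/asboolP; apply: PD.
Qed.
HB.instance Definition _ :=
  GRing.isSubmodClosed.Build k D sp_pred sp_submod.
HB.instance Definition _ := [SubChoice_isSubLmodule of subsp by <:].

Lemma tensor_ind_aux {U V : lmodType k} (d : U -> V -> D) : is_tensor d ->
  (forall u v, P (d u v)) -> forall x, P x.
Proof.
move=> [[b1 b2] hd] hPd.
have Sd u v : d u v \in sp_pred by apply/asboolP.
pose b u v : subsp := SubSp (d u v) (Sd u v).
have bb : bilin b.
  split=> [u|v] a x y; apply: val_inj => /=.
  - exact: (b1 u).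
  - exact: (b2 v).
have [f [lf [hf _]]] := hd _ b bb.
have e : (fun x => ssval (f x)) = (fun x => x).
  apply: (tens_uniq (conj (conj b1 b2) hd)).
  - by move=> a x y; rewrite lf.
  - by [].
  - by move=> u v; rewrite hf.
move=> x; have := valP (f x); move/asboolP.
by have -> : val (f x) = x by exact: (congr1 (fun g => g x) e).
Qed.
End SubSp.


Section Bil.
Variables (U V W : lmodType k) (b : U -> V -> W) (hb : bilin b).
Lemma bilZ1 a x v : b (a *: x) v = a *: b x v.
Proof. exact: (linZ (hb.2 v)). Qed.
Lemma bilZ2 a u y : b u (a *: y) = a *: b u y.
Proof. exact: (linZ (hb.1 u)). Qed.
Lemma bilD1 x y v : b (x + y) v = b x v + b y v.
Proof. exact: (linD (hb.2 v)). Qed.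
Lemma bilD2 u x y : b u (x + y) = b u x + b u y.
Proof. exact: (linD (hb.1 u)). Qed.
Lemma bilB1 x y v : b (x - y) v = b x v - b y v.
Proof. exact: (linB (hb.2 v)). Qed.
Lemma bilB2 u x y : b u (x - y) = b u x - b u y.
Proof. exact: (linB (hb.1 u)). Qed.
Lemma bil01 v : b 0 v = 0.
Proof. exact: (lin0 (hb.2 v)). Qed.
Lemma bil02 u : b u 0 = 0.
Proof. exact: (lin0 (hb.1 u)). Qed.
Lemma bilsum1 (I : Type) (r : seq I) (F : I -> U) v :
  b (\sum_(i <- r) F i) v = \sum_(i <- r) b (F i) v.
Proof. exact: (lin_sum _ _ _ (hb.2 v)). Qed.
Lemma bilsum2 (I : Type) (r : seq I) (F : I -> V) u :
  b u (\sum_(i <- r) F i) = \sum_(i <- r) b u (F i).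
Proof. exact: (lin_sum _ _ _ (hb.1 u)). Qed.
End Bil.
Arguments bilZ1 {U V W b}.
Arguments bilZ2 {U V W b}.
Arguments bilD1 {U V W b}.
Arguments bilD2 {U V W b}.
Arguments bilB1 {U V W b}.
Arguments bilB2 {U V W b}.
Arguments bil01 {U V W b}.
Arguments bil02 {U V W b}.
Arguments bilsum1 {U V W b}.
Arguments bilsum2 {U V W b}.

Lemma cd_sum {E : ltvs k} (I : Type) (r : seq I) (F : I -> cdual E) x :
  cdfun (\sum_(i <- r) F i) x = \sum_(i <- r) cdfun (F i) x.
Proof.
elim: r => [|i r IH]; first by rewrite !big_nil.
by rewrite !big_cons cdD IH.
Qed.

Lemma tens_span {U V D : lmodType k} {d : U -> V -> D} : is_tensor d ->
  forall x, exists s : seq (U * V), x = \sum_(p <- s) d p.1 p.2.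
Proof.
move=> hd; have bd := tens_bilin hd.
apply: (@tensor_ind_aux D (fun x => exists s : seq (U * V),
          x = \sum_(p <- s) d p.1 p.2) _ U V d hd); last first.
  by move=> u v; exists [:: (u, v)]; rewrite big_seq1.
split; first by exists [::]; rewrite big_nil.
move=> a x y [s1 ->] [s2 ->].
exists ([seq (a *: p.1, p.2) | p <- s1] ++ s2).
rewrite big_cat big_map scaler_sumr; congr (_ + _).
by apply: eq_bigr => p _; rewrite (bilZ1 bd).
Qed.

Lemma cdB {E : ltvs k} (u v : cdual E) x : cdfun (u - v) x = cdfun u x - cdfun v x.
Proof. by []. Qed.

Lemma inj_core {E F : ltvs k} {D : lmodType k} {d : cdual E -> cdual F -> D} :
  bilin d -> forall n (s : seq (cdual E * cdual F)), size s = n ->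
  (forall e f, \sum_(p <- s) p.1 e * p.2 f = 0) -> \sum_(p <- s) d p.1 p.2 = 0.
Proof.
move=> bd; elim=> [|n IH] [|[phi psi] s] //= hs H.
- by rewrite big_nil.
have {}hs : size s = n by case: hs.
have H' e f : \sum_(p <- s) p.1 e * p.2 f = - (phi e * psi f).
  by apply/eqP; rewrite -addr_eq0 addrC; apply/eqP; have := H e f; rewrite big_cons.
rewrite big_cons /=.
case: (pselect (exists f0, psi f0 != 0)) => [[f0 hf0] | hno]; last first.
  have psi0 : psi = 0.
    apply: cd_ext => f; rewrite cd0; apply/eqP; apply: contrapT => h; apply: hno.
    by exists f; apply/negP.
  rewrite psi0 (bil02 bd) add0r; apply: IH => // e f.
  by rewrite H' psi0 cd0 mulr0 oppr0.
pose c : k := (psi f0)^-1.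
pose s2 := [seq ((p.1, p.2 - ((c * p.2 f0 : k)) *: psi) : cdual E * cdual F) | p : cdual E * cdual F <- s].
have Hphi : phi = - c *: \sum_(p <- s) (p.2 f0 : k) *: p.1.
  apply: cd_ext => e; rewrite cdZ cd_sum.
  under eq_bigr => p _ do rewrite cdZ.
  rewrite -[phi e](mulfK hf0).
  rewrite -[phi e * psi f0]opprK -(H' e f0).
  rewrite /c mulNr mulNr; congr (- _); rewrite mulrC; congr (_ * _).
  by apply: eq_bigr => p _; rewrite mulrC.
have Hsum : d phi psi = - \sum_(p <- s) ((c * p.2 f0 : k)) *: d p.1 psi.
  rewrite Hphi (bilZ1 bd) (bilsum1 bd) scaleNr scaler_sumr; congr (- _).
  by apply: eq_bigr => p _; rewrite (bilZ1 bd) scalerA.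
have Hs2 : \sum_(p <- s2) d p.1 p.2 = \sum_(p <- s) d p.1 p.2 -
                 \sum_(p <- s) ((c * p.2 f0 : k)) *: d p.1 psi.
  rewrite big_map -sumrB; apply: eq_bigr => p _ /=.
  by rewrite (bilB2 bd) (bilZ2 bd).
rewrite Hsum addrC -Hs2; apply: (IH s2); first by rewrite size_map.
move=> e f; rewrite big_map /=.
rewrite (eq_bigr (fun p : cdual E * cdual F =>
   p.1 e * p.2 f - p.1 e * (c * p.2 f0 * psi f))); last first.
  by move=> p _; rewrite -mulrBr.
rewrite sumrB H'.
have -> : \sum_(p <- s) p.1 e * (c * p.2 f0 * psi f) =
          c * psi f * \sum_(p <- s) p.1 e * p.2 f0.
  rewrite mulr_sumr; apply: eq_bigr => p _; ring.
rewrite H' /c; field; exact: hf0.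
Qed.

Lemma zid (V : zmodType) (X Y P Q R T : V) :
  X + Y - (P + Q) - (R + T) = (X - P - R) + (Y - Q - T).
Proof. by rewrite !opprD [X + Y + _]addrACA (addrACA (X - P)). Qed.

Section Coord.
Variable (E : ltvs k).
Implicit Types (W : E -> Prop).

Lemma subD {W} : subspace W -> forall x y, W x -> W y -> W (x + y).
Proof. by move=> [_ h] x y hx hy; have := h 1 x y hx hy; rewrite scale1r. Qed.
Lemma subZ {W} : subspace W -> forall a x, W x -> W (a *: x).
Proof. by move=> [h0 h] a x hx; have := h a x 0 hx h0; rewrite addr0. Qed.
Lemma subB {W} : subspace W -> forall x y, W x -> W y -> W (x - y).
Proof.
move=> sW x y hx hy; apply: subD => //; rewrite -scaleN1r; exact: subZ.
Qed.

Definition Sf (L : seq (cdual E * E)) (e : E) := \sum_(p <- L) p.1 e *: p.2.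

Lemma Sf_lin L : islin (Sf L).
Proof.
move=> a x y; rewrite /Sf scaler_sumr -big_split; apply: eq_bigr => p _ /=.
rewrite (cflin p.1) scalerDl; congr (_ + _).
by rewrite -scalerA.
Qed.

Lemma Sf_ker L : exists W0, lt_open E W0 /\ forall x, W0 x -> Sf L x = 0.
Proof.
elim: L => [|p L [W0 [oW0 hW0]]].
  by exists (fun _ => True); split; [exact: lt_open_full|move=> x _; rewrite /Sf big_nil].
exists (fun x => W0 x /\ p.1 x = 0); split; first exact: lt_open_cap oW0 (cfopen _).
move=> x [h1 h2]; rewrite /Sf big_cons h2 scale0r add0r; exact: hW0.
Qed.

Lemma coord_ex (s : seq E) : forall E0, lt_open E E0 ->
  (forall e, exists c : 'I_(size s) -> k, E0 (e - \sum_(i < size s) c i *: s`_i)) ->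
  exists L : seq (cdual E * E), forall e, E0 (e - Sf L e).
Proof.
elim: s => [|v s IH] E0 oE0 hs.
  exists [::] => e; have [c h] := hs e; move: h; rewrite big_ord0 /Sf big_nil.
  by [].
have sW := lt_open_subspace _ _ _ oE0.
pose E1 := fun x => exists a : k, E0 (x - a *: v).
have sE1 : subspace E1.
  split; first by exists 0; rewrite scale0r subr0; case: sW.
  move=> a x y [a1 h1] [a2 h2]; exists (a * a1 + a2).
  have -> : a *: x + y - (a * a1 + a2) *: v = a *: (x - a1 *: v) + (y - a2 *: v).
    by rewrite scalerBr scalerA scalerDl opprD addrACA.
  exact: (subD sW _ _ (subZ sW _ _ h1) h2).
have oE1 : lt_open E E1.
  by apply: (lt_open_up _ _ _ _ oE0 sE1) => x hx; exists 0; rewrite scale0r subr0.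
have hs1 : forall e, exists c : 'I_(size s) -> k,
    E1 (e - \sum_(i < size s) c i *: s`_i).
  move=> e; have [c h] := hs e; exists (fun i => c (lift ord0 i)); exists (c ord0).
  move: h; rewrite big_ord_recl /=.
  by rewrite opprD addrA addrAC.
have [L1 hL1] := IH E1 oE1 hs1.
case: (pselect (E0 v)) => [E0v | nE0v].
  exists L1 => e; have [a h] := hL1 e.
  by rewrite -(subrK (a *: v) (e - Sf L1 e)); apply: subD => //; apply: subZ.
have uniq : forall x c c', E0 (x - c *: v) -> E0 (x - c' *: v) -> c = c'.
  move=> x c c' h h'; have := subB sW _ _ h' h.
  rewrite opprB addrC addrA subrK -scalerBl => h2.
  apply/eqP; rewrite -subr_eq0; apply/eqP; apply: contrapT => hne.
  apply: nE0v; have := subZ sW (c - c')^-1 _ h2.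
  by rewrite scalerA mulVf ?scale1r //; apply/eqP.
have [A hA] := choice hL1.
have lA : islin (A : E -> k^o).
  move=> a x y; apply: (uniq (a *: x + y - Sf L1 (a *: x + y))); first exact: hA.
  rewrite (Sf_lin L1).
  change (E0 (a *: x + y - (a *: Sf L1 x + Sf L1 y) - (a * A x + A y) *: v)).
  have -> : a *: x + y - (a *: Sf L1 x + Sf L1 y) - (a * A x + A y) *: v =
            a *: (x - Sf L1 x - A x *: v) + (y - Sf L1 y - A y *: v).
    by rewrite scalerDl !scalerBr scalerA zid.
  exact: (subD sW _ _ (subZ sW _ _ (hA x)) (hA y)).
have [W0 [oW0 hW0]] := Sf_ker L1.
have oA : lt_open E (fun x => A x = 0).
  apply: (lt_open_up _ _ _ _ (lt_open_cap _ _ _ _ oE0 oW0)).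
    exact: (subspace_ker _ lA).
  move=> x [h1 h2]; symmetry; apply: (uniq x).
    by rewrite scale0r subr0.
  by have := hA x; rewrite (hW0 x h2) subr0.
have [al hal] := @mkcd E A lA oA.
exists ((al, v) :: L1) => e; rewrite /Sf big_cons /= hal.
by rewrite opprD addrA addrAC; exact: hA.
Qed.
End Coord.

Lemma Phi_bij : dual_strong_on_cofinite k.
Proof.
split; first exact: eps_bij.
move=> E F cE cF D d T t Phi hd ht [lP hP].
have bd := tens_bilin hd; have bt := tens_bilin ht.
have inj0 : forall x, Phi x = 0 -> x = 0.
  move=> x hx; have [s hs] := tens_span hd x; rewrite hs in hx *.
  apply: (inj_core bd (size s) s erefl) => e f.
  transitivity (cdfun (Phi (\sum_(p <- s) d p.1 p.2)) (t e f)); last by rewrite hx.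
  rewrite (lin_sum _ _ _ lP) cd_sum; apply: eq_bigr => p _; by rewrite hP.
have injP : injective Phi.
  move=> x y h; apply/eqP; rewrite -subr_eq0; apply/eqP; apply: inj0.
  by rewrite (linB lP) h subrr.
have surj : forall lam : cdual (bang E F t), exists x, Phi x = lam.
  move=> lam; have [_ [E0 [F0 [oE oF h1 h2]]]] := cfopen lam.
  have [s hs] := cE E0 oE.
  have [L hL] := coord_ex E s E0 oE hs.
  have hpsi : forall v : E, exists psi : cdual F, forall f, psi f = lam (t v f).
    move=> v.
    have lv : islin (fun f => lam (t v f) : k^o) := lin_comp _ _ (bt.1 v) (cflinT lam).
    have ov : lt_open F (fun f => lam (t v f) = 0).
      apply: (lt_open_up _ _ _ _ oF (subspace_ker _ lv)) => f hf; exact: h2.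
    by have [psi hp] := @mkcd F _ lv ov; exists psi => f; rewrite hp.
  have [Psi hPsi] := choice hpsi.
  exists (\sum_(p <- L) d p.1 (Psi p.2)).
  apply: (cd_tens ht) => e f.
  rewrite (lin_sum _ _ _ lP) cd_sum.
  under eq_bigr => p _ do rewrite hP hPsi.
  have := h1 (e - Sf E L e) f (hL e).
  rewrite (bilB1 bt) (linB (cflinT lam)) => /eqP; rewrite subr_eq0 => /eqP ->.
  rewrite /Sf (bilsum1 bt) (lin_sum _ _ _ (cflinT lam)); apply: eq_bigr => p _.
  by rewrite (bilZ1 bt) (linZ (cflinT lam)).
have [G hG] := choice surj.
exists G; [by move=> x; apply: injP; rewrite hG | exact: hG].
Qed.
End Gen.

Theorem theorem2p1 (k : fieldType) :
  dual_lax_monoidal k /\ dual_strong_on_cofinite k.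
Proof.
split; last exact: Phi_bij.
split; [exact: dual_functorP|exact: mu_existsP|exact: mu_naturalP
       |exact: mu_assocP|exact: mu_unitP].
Qed.
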